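(* Let $\mathbf A\text{-}\mathbf{Doc}\subseteq\mathbf{DocSites}$ and $\mathbf{GeomDoc}_A\subseteq\mathbf{GeomDoc}$, with topologies $J^A_{\mathbb L}$, form a coarse geometric completion. Then the composite 2-functor $\mathfrak I_A:\mathbf A\text{-}\mathbf{Doc}\hookrightarrow\mathbf{DocSites}\xrightarrow{\mathfrak I}\mathbf{GeomDoc}$ lands in $\mathbf{GeomDoc}_A$ and is a strict left 2-adjoint to the 2-embedding $\mathbf{GeomDoc}_A\hookrightarrow\mathbf A\text{-}\mathbf{Doc}$, $\mathbb L\mapsto(\mathbb L,J^A_{\mathbb L})$; i.e. for all $(P,J)\in\mathbf A\text{-}\mathbf{Doc}$ and $\mathbb L\in\mathbf{GeomDoc}_A$ there is a natural isomorphism of categories $$\mathrm{Hom}_{\mathbf A\text{-}\mathbf{Doc}}((P,J),(\mathbb L,J^A_{\mathbb L}))\cong\mathrm{Hom}_{\mathbf{GeomDoc}_A}(\mathfrak I_A(P,J),\mathbb L),$$ whose inverse is precomposition with $\eta^{(P,J)}:(P,J)\to(\mathfrak I(P,J),J^A_{\mathfrak I(P,J)})$.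
   Context: Doctrine: functor $P:\mathcal C^{op}\to\mathbf{PreOrd}$; $\mathcal C\rtimes P$ has objects $(c,x)$, $x\in P(c)$, morphisms $f:(c,x)\to(d,y)$ the $f:c\to d$ with $x\le P(f)(y)$. $\mathbf{DocSites}$: objects $(P,J)$ with $J$ a Grothendieck topology on $\mathcal C\rtimes P$; 1-cells $(F,a)$ with $F$ flat (a morphism of sites for trivial topologies), $a:P\Rightarrow Q\circ F^{op}$ natural, $F\rtimes a:(c,x)\mapsto(F(c),a_c(x))$ a morphism of sites; 2-cells $\alpha:F\Rightarrow F'$ with $a_c(x)\le Q(\alpha_c)(a'_c(x))$. Geometric doctrine: $\mathbb L:\mathcal C^{op}\to\mathbf{Frm}_{open}$ (frames, frame maps with Frobenius left adjoints $\exists_f$) satisfying relative Beck–Chevalley: for $h:e\to d$ and a sieve $S$ on $(d,V)$ with $V=\bigvee_{(f:(c,U)\to(d,V))\in S}\exists_fU$, $\mathbb L(h)(V)=\bigvee\exists_gW$ over $g:(c,W)\to(e,\mathbb L(h)(V))$ with $h\circ g\in S$. $K_{\mathbb L}$: $\{f_i:(c_i,U_i)\to(d,V)\}$ covers iff $V=\bigvee\exists_{f_i}U_i$. $\mathbf{GeomDoc}$: full 2-subcategory of $\mathbf{DocSites}$ on the $(\mathbb L,K_{\mathbb L})$. Geometric completion $\mathfrak I(P,J)$: $\mathfrak I(P,J)(c)$ is the inclusion-ordered set of sets $S$ of pairs $(f,x)$, $f:d\to c$, $x\in P(d)$, with (a) $(f,x)\in S$, $g:e\to d$, $y\le P(g)(x)$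 imply $(f\circ g,y)\in S$; (b) if $\{h_i:(e_i,y_i)\to(d,x)\}$ is $J$-covering and all $(f\circ h_i,y_i)\in S$ then $(f,x)\in S$; $\mathfrak I(P,J)(f)(S)=\{(g,y):(f\circ g,y)\in S\}$; unit $\eta^{(P,J)}_c(x)$ = smallest such $S$ containing $\{(g,y):y\le P(g)(x)\}$. $\mathfrak I$ is a 2-functor $\mathbf{DocSites}\to\mathbf{GeomDoc}$ left 2-adjoint to the inclusion. A coarse geometric completion consists of: a 2-full (full on 2-cells) 2-subcategory $\mathbf A\text{-}\mathbf{Doc}\subseteq\mathbf{DocSites}$; a 2-subcategory $\mathbf{GeomDoc}_A\subseteq\mathbf{GeomDoc}$ full on 1-cells and 2-cells; for each $\mathbb L\in\mathbf{GeomDoc}_A$ (over $\mathcal C$) a Grothendieck topology $J^A_{\mathbb L}\subseteq K_{\mathbb L}$ on $\mathcal C\rtimes\mathbb L$ with $(\mathbb L,J^A_{\mathbb L})\in\mathbf A\text{-}\mathbf{Doc}$, such that every morphism $(F,a):\mathbb L\to\mathbb L'$ of $\mathbf{GeomDoc}_A$ is a morphism $(\mathbb L,J^A_{\mathbb L})\to(\mathbb L',J^A_{\mathbb L'})$ of $\mathbf A\text{-}\mathbf{Doc}$; and for each $(P,J)\in\mathbf A\text{-}\mathbf{Doc}$, $\mathfrak I(P,J)\in\mathbf{GeomDoc}_A$ and $(\mathrm{id},\eta^{(P,J)}):(P,J)\to(\mathfrak I(P,J),J^A_{\mathfrak I(P,J)})$ is a morphism of $\mathbf A\text{-}\mathbf{Doc}$.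 *)

(* Defs.v *)
From Stdlib Require Import ProofIrrelevance FunctionalExtensionality
  PropExtensionality.




Lemma sig_ext {A : Type} {Pr : A -> Prop} (x y : {a | Pr a}) :
  proj1_sig x = proj1_sig y -> x = y.
Proof. destruct x as [x px], y as [y py]; simpl; intros ->; f_equal; apply proof_irrelevance. Qed.

Record Cat := {
  ob :> Type;
  hom : ob -> ob -> Type;
  idm : forall a, hom a a;
  cmp : forall a b c, hom b c -> hom a b -> hom a c;
  cmp_id_l : forall a b (f : hom a b), cmp a b b (idm b) f = f;
  cmp_id_r : forall a b (f : hom a b), cmp a a b f (idm a) = f;
  cmp_assoc : forall a b c d (f : hom a b) (g : hom b c) (h : hom c d),
      cmp a c d h (cmp a b c g f) = cmp a b d (cmp b c d h g) f }.
Arguments hom : clear implicits.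
Arguments idm {_} _.
Arguments cmp {_ _ _ _} _ _.

Record Functor (C D : Cat) := {
  fobj : C -> D;
  fmap : forall a b, hom C a b -> hom D (fobj a) (fobj b);
  fmap_id : forall a, fmap a a (idm a) = idm (fobj a);
  fmap_cmp : forall a b c (f : hom C a b) (g : hom C b c),
      fmap a c (cmp g f) = cmp (fmap b c g) (fmap a b f) }.
Arguments fobj {_ _} _ _.
Arguments fmap {_ _} _ {_ _} _.

Definition FId (C : Cat) : Functor C C.
Proof.
  refine {| fobj := fun a => a; fmap := fun a b f => f |}; reflexivity.
Defined.

Definition Fcomp {C D E : Cat} (G : Functor D E) (F : Functor C D) : Functor C E.
Proof.
  refine {| fobj := fun a => fobj G (fobj F a);
            fmap := fun a b f => fmap G (fmap F f) |}.
  - intros a; rewrite !fmap_id; reflexivity.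
  - intros a b c f g; rewrite !fmap_cmp; reflexivity.
Defined.

(* ---------- doctrines: functors C^op -> PreOrd ---------- *)
Record Doctrine (C : Cat) := {
  pt : C -> Type;
  ple : forall c, pt c -> pt c -> Prop;
  ple_refl : forall c (x : pt c), ple c x x;
  ple_trans : forall c (x y z : pt c), ple c x y -> ple c y z -> ple c x z;
  pmap : forall c d, hom C c d -> pt d -> pt c;
  pmap_mono : forall c d (f : hom C c d) x y, ple d x y -> ple c (pmap c d f x) (pmap c d f y);
  pmap_id : forall c (x : pt c), pmap c c (idm c) x = x;
  pmap_cmp : forall c d e (f : hom C c d) (g : hom C d e) x,
      pmap c e (cmp g f) x = pmap c d f (pmap d e g x) }.
Arguments pt {_} _ _.
Arguments ple {_} _ {_} _ _.
Arguments pmap {_} _ {_ _} _ _.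

Section Groth.
Variables (C : Cat) (P : Doctrine C).
Definition gob := {c : C & pt P c}.
Definition ghom (a b : gob) :=
  {f : hom C (projT1 a) (projT1 b) | ple P (projT2 a) (pmap P f (projT2 b))}.
Definition gid (a : gob) : ghom a a.
Proof. exists (idm _); rewrite pmap_id; apply ple_refl. Defined.
Definition gcmp (a b c : gob) (g : ghom b c) (f : ghom a b) : ghom a c.
Proof.
  exists (cmp (proj1_sig g) (proj1_sig f)).
  rewrite pmap_cmp. eapply ple_trans; [exact (proj2_sig f)|].
  apply pmap_mono; exact (proj2_sig g).
Defined.
Definition groth : Cat.
Proof.
  refine {| ob := gob; hom := ghom; idm := gid; cmp := gcmp |}.
  - intros; apply sig_ext; simpl; apply cmp_id_l.
  - intros; apply sig_ext; simpl; apply cmp_id_r.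
  - intros; apply sig_ext; simpl; apply cmp_assoc.
Defined.
End Groth.
Arguments groth {C} P.

Definition sieve (C : Cat) (a : C) := forall b : C, hom C b a -> Prop.

Definition is_sieve {C : Cat} {a : C} (S : sieve C a) : Prop :=
  forall b c (f : hom C b a) (g : hom C c b), S b f -> S c (cmp f g).

Definition pull {C : Cat} {a b : C} (h : hom C b a) (S : sieve C a) : sieve C b :=
  fun c g => S c (cmp h g).

Definition topology (C : Cat) := forall a : C, sieve C a -> Prop.

Definition is_topology {C : Cat} (J : topology C) : Prop :=
  (forall a S, J a S -> is_sieve S) /\
  (forall a, J a (fun _ _ => True)) /\
  (forall a b (h : hom C b a) S, J a S -> J b (pull h S)) /\
  (forall a (S R : sieve C a), is_sieve R -> J a S ->
      (forall b (f : hom C b a), S b f -> J b (pull f R)) -> J a R).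

Definition triv (C : Cat) : topology C :=
  fun a S => is_sieve S /\ S a (idm a).

(* F : (C,J) -> (D,K) morphism of sites (SGA4 / Caramello), for the
   functor with object part Fo and arrow part Fm *)
Definition is_mos {C D : Cat} (J : topology C) (K : topology D)
  (Fo : C -> D) (Fm : forall a b, hom C a b -> hom D (Fo a) (Fo b)) : Prop :=
  (forall a S, J a S ->
     K (Fo a) (fun d g => exists b (f : hom C b a) (k : hom D d (Fo b)),
                              S b f /\ g = cmp (Fm b a f) k)) /\
  (* local non-emptiness *)
  (forall d : D, K d (fun e _ => exists c : C, inhabited (hom D e (Fo c)))) /\
  (* local connectedness for spans *)
  (forall (d : D) (c1 c2 : C) (g1 : hom D d (Fo c1)) (g2 : hom D d (Fo c2)),
     K d (fun e h => exists c (f1 : hom C c c1) (f2 : hom C c c2) (k : hom D e (Fo c)),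
             cmp (Fm _ _ f1) k = cmp g1 h /\ cmp (Fm _ _ f2) k = cmp g2 h)) /\
  (* local equalizers *)
  (forall (d : D) (c1 c2 : C) (f1 f2 : hom C c1 c2) (g : hom D d (Fo c1)),
     cmp (Fm _ _ f1) g = cmp (Fm _ _ f2) g ->
     K d (fun e h => exists c (e' : hom C c c1) (k : hom D e (Fo c)),
             cmp f1 e' = cmp f2 e' /\ cmp (Fm _ _ e') k = cmp g h)).

Definition flat {C D : Cat} (F : Functor C D) : Prop :=
  is_mos (triv C) (triv D) (fobj F) (fun a b f => fmap F f).

Record DocSite := { sC : Cat; sP : Doctrine sC; sJ : topology (groth sP) }.

Definition IsDocSite (X : DocSite) : Prop := is_topology (sJ X).

Record Mor1 {C D : Cat} (P : Doctrine C) (Q : Doctrine D) := {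
  mF : Functor C D;
  ma : forall c, pt P c -> pt Q (fobj mF c) }.
Arguments mF {C D P Q} m.
Arguments ma {C D P Q} m c x.

Definition a_mono {C D} {P : Doctrine C} {Q : Doctrine D} (u : Mor1 P Q) : Prop :=
  forall c (x y : pt P c), ple P x y -> ple Q (ma u c x) (ma u c y).
Definition a_nat {C D} {P : Doctrine C} {Q : Doctrine D} (u : Mor1 P Q) : Prop :=
  forall c d (f : hom C c d) (y : pt P d),
    ma u c (pmap P f y) = pmap Q (fmap (mF u) f) (ma u d y).

Definition rt_o {C D} {P : Doctrine C} {Q : Doctrine D} (u : Mor1 P Q)
  (a : groth P) : groth Q :=
  existT _ (fobj (mF u) (projT1 a)) (ma u _ (projT2 a)).
Definition rt_m {C D} {P : Doctrine C} {Q : Doctrine D} (u : Mor1 P Q)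
  (hm : a_mono u) (hn : a_nat u) (a b : groth P) (f : hom (groth P) a b) :
  hom (groth Q) (rt_o u a) (rt_o u b).
Proof.
  exists (fmap (mF u) (proj1_sig f)); simpl.
  rewrite <- hn. apply hm. exact (proj2_sig f).
Defined.

Definition IsDocMor (X Y : DocSite) (u : Mor1 (sP X) (sP Y)) : Prop :=
  flat (mF u) /\
  exists (hm : a_mono u) (hn : a_nat u),
    is_mos (sJ X) (sJ Y) (rt_o u) (rt_m u hm hn).

Definition Is2Cell {C D} {P : Doctrine C} {Q : Doctrine D} (u v : Mor1 P Q)
  (al : forall c, hom D (fobj (mF u) c) (fobj (mF v) c)) : Prop :=
  (forall c d (f : hom C c d), cmp (al d) (fmap (mF u) f) = cmp (fmap (mF v) f) (al c)) /\
  (forall c (x : pt P c), ple Q (ma u c x) (pmap Q (al c) (ma v c x))).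

Definition id1 {C} (P : Doctrine C) : Mor1 P P :=
  {| mF := FId C; ma := fun c x => x |}.
Definition comp1 {C D E} {P : Doctrine C} {Q : Doctrine D} {R : Doctrine E}
  (v : Mor1 Q R) (u : Mor1 P Q) : Mor1 P R :=
  {| mF := Fcomp (mF v) (mF u); ma := fun c x => ma v _ (ma u c x) |}.

Section Geom.
Variables (C : Cat) (L : Doctrine C).

Definition is_join {c} (X : pt L c -> Prop) (v : pt L c) : Prop :=
  forall w, ple L v w <-> (forall x, X x -> ple L x w).
Definition is_meet {c} (x y m : pt L c) : Prop :=
  forall w, ple L w m <-> (ple L w x /\ ple L w y).
Definition is_top {c} (t : pt L c) : Prop := forall w, ple L w t.

(* "V = \/_{f:(c,U)->(d,V) in S} exists_f U", written via the adjunction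
   exists_f -| L(f) : exists_f U <= W  iff  U <= L(f)(W) *)
Definition covers_join {a : groth L} (S : sieve (groth L) a) : Prop :=
  forall W : pt L (projT1 a),
    ple L (projT2 a) W <->
    (forall b (f : hom (groth L) b a), S b f -> ple L (projT2 b) (pmap L (proj1_sig f) W)).

Definition Kgeom : topology (groth L) :=
  fun a S => is_sieve S /\ covers_join S.

Definition hlift {e d : C} (h : hom C e d) (V : pt L d) :
  hom (groth L) (existT _ e (pmap L h V)) (existT _ d V) :=
  exist _ h (ple_refl C L e (pmap L h V)).

Definition IsGeom : Prop :=
  (* each L(c) is a frame *)
  (forall c (x y : pt L c), ple L x y -> ple L y x -> x = y) /\
  (forall c (X : pt L c -> Prop), exists v, is_join X v) /\
  (forall c, exists t : pt L c, is_top t) /\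
  (forall c (x y : pt L c), exists m, is_meet x y m) /\
  (forall c (x v m : pt L c) (X : pt L c -> Prop), is_join X v -> is_meet x v m ->
      is_join (fun z => exists y, X y /\ is_meet x y z) m) /\
  (* each L(f) is a frame homomorphism *)
  (forall c d (f : hom C c d) (X : pt L d -> Prop) v, is_join X v ->
      is_join (fun z => exists y, X y /\ z = pmap L f y) (pmap L f v)) /\
  (forall c d (f : hom C c d) t, is_top t -> is_top (pmap L f t)) /\
  (forall c d (f : hom C c d) (x y m : pt L d), is_meet x y m ->
      is_meet (pmap L f x) (pmap L f y) (pmap L f m)) /\
  (* ... with a left adjoint satisfying Frobenius reciprocity *)
  (forall c d (f : hom C c d), exists ex : pt L c -> pt L d,
      (forall U V, ple L (ex U) V <-> ple L U (pmap L f V)) /\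
      (forall U V m m', is_meet U (pmap L f V) m -> is_meet (ex U) V m' -> ex m = m')) /\
  (* relative Beck-Chevalley condition *)
  (forall (d e : C) (h : hom C e d) (V : pt L d) (S : sieve (groth L) (existT _ d V)),
      is_sieve S -> covers_join S ->
      covers_join (pull (hlift h V) S)).
End Geom.
Arguments Kgeom {C} L.
Arguments IsGeom {C} L.

Record GDoc := { gC : Cat; gL : Doctrine gC }.

Definition toSite (G : GDoc) (J : topology (groth (gL G))) : DocSite :=
  {| sC := gC G; sP := gL G; sJ := J |}.
Definition KSite (G : GDoc) : DocSite := toSite G (Kgeom (gL G)).

Section Completion.
Variables (C : Cat) (P : Doctrine C) (J : topology (groth P)).

Definition closedI {c : C} (S : forall d, hom C d c -> pt P d -> Prop) : Prop :=
  (forall d e (f : hom C d c) (x : pt P d) (g : hom C e d) (y : pt P e),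
      S d f x -> ple P y (pmap P g x) -> S e (cmp f g) y) /\
  (forall d (f : hom C d c) (x : pt P d) (R : sieve (groth P) (existT _ d x)),
      J _ R ->
      (forall e (y : pt P e) (h : hom (groth P) (existT _ e y) (existT _ d x)),
          R _ h -> S e (cmp f (proj1_sig h)) y) ->
      S d f x).

Definition Ipt (c : C) := {S : forall d, hom C d c -> pt P d -> Prop | closedI S}.
Definition Iple (c : C) (S T : Ipt c) : Prop :=
  forall d f x, proj1_sig S d f x -> proj1_sig T d f x.

Definition Imap (c c' : C) (f : hom C c c') (S : Ipt c') : Ipt c.
Proof.
  exists (fun d g y => proj1_sig S d (cmp f g) y).
  destruct S as [S [Ha Hb]]; simpl; split.
  - intros d e g x k y H1 H2. rewrite cmp_assoc. apply (Ha _ _ _ _ _ _ H1 H2).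
  - intros d g x R HR H. apply (Hb _ _ _ R HR). intros e y h Hh.
    rewrite <- cmp_assoc. apply H; exact Hh.
Defined.

Definition Idoc : Doctrine C.
Proof.
  refine {| pt := Ipt; ple := Iple; pmap := Imap |}.
  - intros c x d f y H; exact H.
  - intros c x y z H1 H2 d f w H; apply H2, H1, H.
  - intros c d f x y H e g z; simpl; apply H.
  - intros c x; apply sig_ext; simpl.
    apply functional_extensionality_dep; intro d.
    apply functional_extensionality; intro g.
    rewrite cmp_id_l; reflexivity.
  - intros c d e f g x; apply sig_ext; simpl.
    apply functional_extensionality_dep; intro d'.
    apply functional_extensionality; intro k.
    rewrite cmp_assoc; reflexivity.
Defined.

(* eta_c(x) = smallest J-closed set containing {(g,y) : y <= P(g)(x)} *)
Definition eta (c : C) (x : pt P c) : pt Idoc c.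
Proof.
  exists (fun d g y => forall S : forall d, hom C d c -> pt P d -> Prop,
            closedI S -> (forall d' g' y', ple P y' (pmap P g' x) -> S d' g' y') ->
            S d g y).
  split.
  - intros d e f x0 g y H1 H2 S HS Hgen.
    apply (proj1 HS _ _ _ _ _ _ (H1 S HS Hgen) H2).
  - intros d f x0 R HR H S HS Hgen.
    apply (proj2 HS _ _ _ R HR). intros e y h Hh. apply (H e y h Hh S HS Hgen).
Defined.
End Completion.
Arguments Idoc {C} P J.
Arguments eta {C} P J c x.

Definition Isite (X : DocSite) : GDoc :=
  {| gC := sC X; gL := Idoc (sP X) (sJ X) |}.

Definition etaMor (X : DocSite) : Mor1 (sP X) (gL (Isite X)) :=
  {| mF := FId (sC X); ma := eta (sP X) (sJ X) |}.

Record CoarseCompletion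
  (AObj : DocSite -> Prop)
  (AMor : forall X Y : DocSite, Mor1 (sP X) (sP Y) -> Prop)
  (GA : GDoc -> Prop)
  (JA : forall G : GDoc, topology (groth (gL G))) : Prop := {
  (* A-Doc is a 2-subcategory of DocSites (2-full: all 2-cells kept) *)
  cc_obj : forall X, AObj X -> IsDocSite X;
  cc_mor : forall X Y u, AObj X -> AObj Y -> AMor X Y u -> IsDocMor X Y u;
  cc_id : forall X, AObj X -> AMor X X (id1 (sP X));
  cc_comp : forall X Y Z (u : Mor1 (sP X) (sP Y)) (v : Mor1 (sP Y) (sP Z)),
      AObj X -> AObj Y -> AObj Z -> AMor X Y u -> AMor Y Z v -> AMor X Z (comp1 v u);
  (* GeomDoc_A is a (1- and 2-full) 2-subcategory of GeomDoc *)
  cc_geom : forall G, GA G -> IsGeom (gL G);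
  cc_JA_sub : forall G, GA G -> forall a S, JA G a S -> Kgeom (gL G) a S;
  cc_JA_obj : forall G, GA G -> AObj (toSite G (JA G));
  cc_JA_mor : forall G G' (u : Mor1 (gL G) (gL G')), GA G -> GA G' ->
      IsDocMor (KSite G) (KSite G') u -> AMor (toSite G (JA G)) (toSite G' (JA G')) u;
  cc_I : forall X, AObj X -> GA (Isite X);
  cc_eta : forall X, AObj X ->
      AMor X (toSite (Isite X) (JA (Isite X))) (etaMor X) }.

(* Main.v *)
Require Import Defs.
From Stdlib Require Import ProofIrrelevance FunctionalExtensionality ClassicalEpsilon Eqdep.


Lemma arr_le {C} (L : Doctrine C) (a b : groth L) (f : hom (groth L) b a) W :
  ple L (projT2 a) W -> ple L (projT2 b) (pmap L (proj1_sig f) W).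
Proof. intros H. eapply ple_trans; [exact (proj2_sig f)|]. apply pmap_mono; exact H. Qed.

Lemma covers_trans {C} (L : Doctrine C) (a : groth L) (R R' : sieve (groth L) a) :
  Kgeom L a R -> is_sieve R' ->
  (forall b f, R b f -> covers_join C L (pull f R')) -> Kgeom L a R'.
Proof.
  intros [_ HR] HS' H. split; [exact HS'|]. intros W; split.
  - intros Hle b f _. apply arr_le; exact Hle.
  - intros Hall. apply (proj2 (HR W)). intros b f Hf.
    apply (proj2 (H b f Hf (pmap L (proj1_sig f) W))).
    intros c g Hg. rewrite <- pmap_cmp. exact (Hall c (cmp f g) Hg).
Qed.

Lemma covers_mono {C} (L : Doctrine C) (a : groth L) (R R' : sieve (groth L) a) :
  covers_join C L R -> is_sieve R' ->
  (forall b f, R b f -> R' b f) -> Kgeom L a R'.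
Proof.
  intros HR HS' H. split; [exact HS'|]. intros W; split.
  - intros Hle b f _. apply arr_le; exact Hle.
  - intros Hall. apply (proj2 (HR W)). intros b f Hf. apply Hall, H, Hf.
Qed.

Definition is_ex {C} (L : Doctrine C) {c d} (f : hom C c d) (U : pt L c) (z : pt L d) :=
  forall V, ple L z V <-> ple L U (pmap L f V).

Section GeomFacts.
Context {C : Cat} (L : Doctrine C) (HG : IsGeom L).
Lemma g_antisym c (x y : pt L c) : ple L x y -> ple L y x -> x = y.
Proof. apply HG. Qed.
Lemma g_join c (X : pt L c -> Prop) : exists v, is_join C L X v.
Proof. apply HG. Qed.
Lemma g_meet c (x y : pt L c) : exists m, is_meet C L x y m.
Proof. apply HG. Qed.
Lemma g_distr c (x v m : pt L c) (X : pt L c -> Prop) : is_join C L X v -> is_meet C L x v m ->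
      is_join C L (fun z => exists y, X y /\ is_meet C L x y z) m.
Proof. apply HG. Qed.
Lemma g_ex c d (f : hom C c d) U : exists z, is_ex L f U z.
Proof.
  pose proof HG as (_&_&_&_&_&_&_&_&Hex&_).
  destruct (Hex _ _ f) as [ex [Had _]].
  exists (ex U). intros V; apply Had.
Qed.
Lemma is_ex_unique c d (f : hom C c d) U z z' : is_ex L f U z -> is_ex L f U z' -> z = z'.
Proof.
  intros H1 H2. apply g_antisym.
  - apply H1, H2, ple_refl.
  - apply H2, H1, ple_refl.
Qed.
Lemma g_frob c d (f : hom C c d) U V z mm m' :
  is_ex L f U z -> is_meet C L U (pmap L f V) mm -> is_meet C L z V m' -> is_ex L f mm m'.
Proof.
  intros Hz Hmm Hm'.
  pose proof HG as (_&_&_&_&_&_&_&_&Hex&_).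
  destruct (Hex _ _ f) as [ex [Had Hfr]].
  assert (E : z = ex U) by (apply (is_ex_unique _ _ f U); [exact Hz| intros W; apply Had]).
  subst z. rewrite <- (Hfr U V mm m' Hmm Hm'). intros W; apply Had.
Qed.
Lemma g_bc (d e : C) (h : hom C e d) (V : pt L d) (S : sieve (groth L) (existT _ d V)) :
      is_sieve S -> covers_join C L S ->
      covers_join C L (pull (hlift C L h V) S).
Proof. apply HG. Qed.
End GeomFacts.


Section EtaFacts.
Context {C : Cat} (P : Doctrine C) (J : topology (groth P)).
Lemma eta_gen c (x : pt P c) d (g : hom C d c) y :
  ple P y (pmap P g x) -> proj1_sig (eta P J c x) d g y.
Proof. intros Hy S HS Hg; apply Hg, Hy. Qed.
Lemma eta_min c (x : pt P c) (T : Ipt C P J c) :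
  (forall d g y, ple P y (pmap P g x) -> proj1_sig T d g y) -> Iple C P J c (eta P J c x) T.
Proof. intros H d f y Hy. apply Hy; [exact (proj2_sig T)| exact H]. Qed.
Lemma eta_self c (x : pt P c) : proj1_sig (eta P J c x) c (idm c) x.
Proof. apply eta_gen. rewrite pmap_id. apply ple_refl. Qed.
Lemma eta_le c (S : Ipt C P J c) d (f : hom C d c) x :
  proj1_sig S d f x -> Iple C P J d (eta P J d x) (Imap C P J d c f S).
Proof.
  intros H. apply eta_min. intros e g y Hy. simpl.
  exact (proj1 (proj2_sig S) d e f x g y H Hy).
Qed.
Lemma in_of_eta_le c (S : Ipt C P J c) d (f : hom C d c) x :
  Iple C P J d (eta P J d x) (Imap C P J d c f S) -> proj1_sig S d f x.
Proof.
  intros H. pose proof (H d (idm d) x (eta_self d x)) as H1. simpl in H1.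
  rewrite cmp_id_r in H1. exact H1.
Qed.
End EtaFacts.

Section Ext.
Context {C : Cat} (P : Doctrine C) (J : topology (groth P))
  {D : Cat} (L : Doctrine D) (JA : topology (groth L)) (u : Mor1 P L)
  (hm : a_mono u) (hn : a_nat u)
  (Hmos : is_mos J JA (rt_o u) (rt_m u hm hn))
  (Hsub : forall a S, JA a S -> Kgeom L a S)
  (Hflat : flat (mF u)) (HG : IsGeom L).

Local Notation F := (mF u).
Local Notation I := (Idoc P J).

Definition Qset c (Z : pt L (fobj F c)) : Ipt C P J c.
Proof.
  exists (fun d f y => ple L (ma u d y) (pmap L (fmap F f) Z)). split.
  - intros d e f x g y H1 H2.
    eapply ple_trans; [apply hm, H2|]. rewrite hn.
    rewrite fmap_cmp, pmap_cmp. apply pmap_mono, H1.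
  - intros d f x R HR H.
    destruct (Hsub _ _ (proj1 Hmos _ R HR)) as [_ Hc].
    apply (proj2 (Hc (pmap L (fmap F f) Z))).
    intros b g [b0 [f0 [k [Hb0 ->]]]].
    destruct b0 as [e y]. specialize (H e y f0 Hb0).
    simpl. rewrite !pmap_cmp.
    eapply ple_trans; [exact (proj2_sig k)|]. simpl. apply pmap_mono.
    rewrite <- pmap_cmp, <- fmap_cmp. exact H.
Defined.

Definition vset c (S : Ipt C P J c) : pt L (fobj F c) -> Prop :=
  fun z => exists d (f : hom C d c) x, proj1_sig S d f x /\ is_ex L (fmap F f) (ma u d x) z.

Definition vfun c (S : Ipt C P J c) : pt L (fobj F c) :=
  proj1_sig (constructive_indefinite_description _ (g_join L HG _ (vset c S))).

Lemma vfun_join c S : is_join D L (vset c S) (vfun c S).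
Proof. unfold vfun. destruct constructive_indefinite_description; assumption. Qed.

Lemma adj c S Z : ple L (vfun c S) Z <->
  (forall d f x, proj1_sig S d f x -> ple L (ma u d x) (pmap L (fmap F f) Z)).
Proof.
  split.
  - intros H d f x Hx. destruct (g_ex L HG _ _ (fmap F f) (ma u d x)) as [z Hz].
    apply Hz. eapply ple_trans; [|exact H].
    apply (proj1 (vfun_join c S (vfun c S)) (ple_refl _ _ _ _)).
    exists d, f, x; split; assumption.
  - intros H. apply (proj2 (vfun_join c S Z)). intros z [d [f [x [Hx Hz]]]].
    apply Hz, H, Hx.
Qed.

Lemma adjQ c S Z : ple L (vfun c S) Z <-> Iple C P J c S (Qset c Z).
Proof. rewrite adj. split; intros H d f x; apply H. Qed.

Lemma v_upper c S d f x : proj1_sig S d f x -> ple L (ma u d x) (pmap L (fmap F f) (vfun c S)).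
Proof. intros H. apply (proj1 (adj c S _) (ple_refl _ _ _ _)), H. Qed.

Lemma v_mono : forall c (S S' : Ipt C P J c), Iple C P J c S S' -> ple L (vfun c S) (vfun c S').
Proof.
  intros c S S' H. apply adj. intros d f x Hx. apply v_upper, H, Hx.
Qed.

Lemma v_eta c x : vfun c (eta P J c x) = ma u c x.
Proof.
  apply (g_antisym L HG).
  - apply adjQ. apply eta_min. intros d g y Hy. simpl.
    eapply ple_trans; [apply hm, Hy|]. rewrite hn. apply ple_refl.
  - pose proof (v_upper c (eta P J c x) c (idm c) x (eta_self P J c x)) as H.
    rewrite fmap_id, pmap_id in H. exact H.
Qed.
End Ext.


Section Ext2.
Context {C : Cat} (P : Doctrine C) (J : topology (groth P))
  {D : Cat} (L : Doctrine D) (JA : topology (groth L)) (u : Mor1 P L)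
  (hm : a_mono u) (hn : a_nat u)
  (Hmos : is_mos J JA (rt_o u) (rt_m u hm hn))
  (Hsub : forall a S, JA a S -> Kgeom L a S)
  (Hflat : flat (mF u)) (HG : IsGeom L).

Local Notation F := (mF u).
Local Notation v := (vfun P J L u HG).

Lemma flat_span e c1 c2 (g1 : hom D e (fobj F c1)) (g2 : hom D e (fobj F c2)) :
  exists c0 (a1 : hom C c0 c1) (a2 : hom C c0 c2) (k0 : hom D e (fobj F c0)),
    cmp (fmap F a1) k0 = g1 /\ cmp (fmap F a2) k0 = g2.
Proof.
  destruct Hflat as (_&_&Hs&_). destruct (Hs e c1 c2 g1 g2) as [_ H].
  destruct H as [c0 [a1 [a2 [k0 [E1 E2]]]]]. rewrite cmp_id_r in E1, E2.
  exists c0, a1, a2, k0; split; assumption.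
Qed.

Lemma flat_eq e c1 c2 (f1 f2 : hom C c1 c2) (g : hom D e (fobj F c1)) :
  cmp (fmap F f1) g = cmp (fmap F f2) g ->
  exists c0 (e' : hom C c0 c1) (k : hom D e (fobj F c0)),
    cmp f1 e' = cmp f2 e' /\ cmp (fmap F e') k = g.
Proof.
  intros Hg. destruct Hflat as (_&_&_&He). destruct (He e c1 c2 f1 f2 g Hg) as [_ H].
  destruct H as [c0 [e' [k [E1 E2]]]]. rewrite cmp_id_r in E2.
  exists c0, e', k; split; assumption.
Qed.

Definition sig_gen c (S : Ipt C P J c) : sieve (groth L) (existT _ (fobj F c) (v c S)) :=
  fun b m => exists d (g : hom C d c) x (k : hom (groth L) b (existT _ (fobj F d) (ma u d x))),
     proj1_sig S d g x /\ proj1_sig m = cmp (fmap F g) (proj1_sig k).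

Lemma sig_gen_sieve c S : is_sieve (sig_gen c S).
Proof.
  intros b b' m g [d [h [x [k [Hx E]]]]].
  exists d, h, x, (cmp k g); split; [exact Hx|]. simpl. rewrite cmp_assoc. f_equal. exact E.
Qed.

Lemma sig_gen_cov c S : covers_join D L (sig_gen c S).
Proof.
  intros W; split.
  - intros Hle b f _. apply arr_le; exact Hle.
  - intros H. apply adj. intros d g x Hx.
    pose (m := exist (fun f : hom D (fobj F d) (fobj F c) =>
               ple L (ma u d x) (pmap L f (v c S)))
               (fmap F g) (v_upper P J L u HG c S d g x Hx)
             : hom (groth L) (existT _ (fobj F d) (ma u d x)) (existT _ (fobj F c) (v c S))).
    apply (H _ m). exists d, g, x, (gid _ _ _). split; [exact Hx|].
    simpl. rewrite cmp_id_r. reflexivity.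
Qed.

Lemma v_nat c d (f : hom C c d) (S : Ipt C P J d) :
  v c (Imap C P J c d f S) = pmap L (fmap F f) (v d S).
Proof.
  apply (g_antisym L HG).
  - apply adj. intros e g x Hx. simpl in Hx.
    rewrite <- pmap_cmp, <- fmap_cmp. apply v_upper, Hx.
  - pose proof (g_bc L HG _ _ (fmap F f) (v d S) (sig_gen d S) (sig_gen_sieve d S)
                  (sig_gen_cov d S)) as Hc.
    apply (proj2 (Hc (v c (Imap C P J c d f S)))).
    intros b m' Hm. destruct Hm as [d' [g [x [k [Hx E]]]]].
    simpl in E. destruct b as [e W0]. simpl in *.
    set (mb := proj1_sig m') in *. set (kb := proj1_sig k) in *.
    destruct (flat_span e c d' mb kb) as [c0 [a1 [a2 [k0 [E1 E2]]]]].
    assert (Heq : cmp (fmap F (cmp f a1)) k0 = cmp (fmap F (cmp g a2)) k0).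
    { rewrite !fmap_cmp, <- !cmp_assoc, E1, E2. exact E. }
    destruct (flat_eq e c0 d (cmp f a1) (cmp g a2) k0 Heq) as [c1 [e' [k1 [E3 E4]]]].
    assert (Hin : proj1_sig S c1 (cmp f (cmp a1 e')) (pmap P (cmp a2 e') x)).
    { pose proof (proj1 (proj2_sig S) d' c1 g x (cmp a2 e') _ Hx (ple_refl _ _ _ _)) as H1.
      rewrite cmp_assoc, <- E3, <- cmp_assoc in H1. exact H1. }
    pose proof (v_upper P J L u HG c (Imap C P J c d f S) c1 (cmp a1 e') _ Hin) as Hup.
    rewrite hn in Hup.
    eapply ple_trans; [exact (proj2_sig k)|]. fold kb.
    rewrite <- E2, <- E4, cmp_assoc, <- fmap_cmp, pmap_cmp.
    eapply ple_trans; [apply pmap_mono, Hup|].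
    rewrite <- pmap_cmp, fmap_cmp, <- cmp_assoc, E4, E1. apply ple_refl.
Qed.
End Ext2.


Lemma is_meet_sym {C} (L : Doctrine C) c (x y m : pt L c) : is_meet C L x y m -> is_meet C L y x m.
Proof. intros H w. specialize (H w). tauto. Qed.

Section Ext3.
Context {C : Cat} (P : Doctrine C) (J : topology (groth P))
  {D : Cat} (L : Doctrine D) (JA : topology (groth L)) (u : Mor1 P L)
  (hm : a_mono u) (hn : a_nat u)
  (Hmos : is_mos J JA (rt_o u) (rt_m u hm hn))
  (Hsub : forall a S, JA a S -> Kgeom L a S)
  (Hflat : flat (mF u)) (HG : IsGeom L).

Local Notation F := (mF u).
Local Notation v := (vfun P J L u HG).
Local Notation I := (Idoc P J).

Definition Rg (a : groth L) c1 (S1 : Ipt C P J c1)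
  (g : hom (groth L) a (existT _ (fobj F c1) (v c1 S1))) : sieve (groth L) a :=
  fun b h => exists d (f : hom C d c1) x (k : hom (groth L) b (existT _ (fobj F d) (ma u d x))),
     proj1_sig S1 d f x /\ cmp (proj1_sig g) (proj1_sig h) = cmp (fmap F f) (proj1_sig k).

Lemma lemA a c1 S1 g : Kgeom L a (Rg a c1 S1 g).
Proof.
  split.
  - intros b b' h h' [d [f [x [k [Hx E]]]]]. exists d, f, x, (cmp k h'); split; [exact Hx|].
    simpl. rewrite cmp_assoc.
    transitivity (cmp (cmp (fmap F f) (proj1_sig k)) (proj1_sig h')); [f_equal; exact E|].
    symmetry; apply cmp_assoc.
  - intros Z; split.
    + intros Hle b f _. apply arr_le; exact Hle.
    + intros H. destruct a as [e W]. simpl in *.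
      set (g0 := proj1_sig g) in *.
      pose proof (g_bc L HG _ _ g0 (v c1 S1) (sig_gen P J L u HG c1 S1)
                    (sig_gen_sieve P J L u HG c1 S1) (sig_gen_cov P J L u HG c1 S1)) as Hc.
      set (V := pmap L g0 (v c1 S1)) in *.
      set (Xs := fun z => exists b (m : hom (groth L) b (existT _ e V)),
                   pull (hlift D L g0 (v c1 S1)) (sig_gen P J L u HG c1 S1) b m /\
                   is_ex L (proj1_sig m) (projT2 b) z).
      assert (HJ : is_join D L Xs V).
      { intros Y; split.
        - intros HVY z [b [m [Hm Hz]]]. apply Hz. exact (proj1 (Hc Y) HVY b m Hm).
        - intros HX. apply (proj2 (Hc Y)). intros b m Hm.
          destruct (g_ex L HG _ _ (proj1_sig m) (projT2 b)) as [z Hz].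
          apply Hz, HX. exists b, m; split; assumption. }
      assert (HM : is_meet D L W V W).
      { intros w; split.
        - intros Hw; split; [exact Hw|]. eapply ple_trans; [exact Hw|]. exact (proj2_sig g).
        - intros [Hw _]; exact Hw. }
      pose proof (g_distr L HG _ _ _ _ _ HJ HM) as HD.
      apply (proj2 (HD Z)). intros z' [y [[b [m [Hm Hy]]] Hz']].
      destruct b as [e' W'']. simpl in *.
      destruct (g_meet L HG _ W'' (pmap L (proj1_sig m) W)) as [mm Hmm].
      pose proof (g_frob L HG _ _ (proj1_sig m) W'' W y mm z' Hy Hmm (is_meet_sym L _ _ _ _ Hz'))
        as Hex.
      apply Hex.
      destruct Hm as [d [f [x [k [Hx E]]]]].
      assert (Hmm1 : ple L mm W'') by (apply (proj1 (Hmm mm) (ple_refl _ _ _ _))).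
      assert (Hmm2 : ple L mm (pmap L (proj1_sig m) W)) by (apply (proj1 (Hmm mm) (ple_refl _ _ _ _))).
      pose (h := exist (fun f0 : hom D e' e => ple L mm (pmap L f0 W)) (proj1_sig m) Hmm2
                 : hom (groth L) (existT _ e' mm) (existT _ e W)).
      pose (k' := exist (fun f0 : hom D e' (fobj F d) => ple L mm (pmap L f0 (ma u d x)))
                   (proj1_sig k) (ple_trans _ _ _ _ _ _ Hmm1 (proj2_sig k))
                 : hom (groth L) (existT _ e' mm) (existT _ (fobj F d) (ma u d x))).
      apply (H _ h). exists d, f, x, k'. split; [exact Hx|]. simpl. exact E.
Qed.
End Ext3.


Lemma pull_sieve {C : Cat} {a b : C} (h : hom C b a) (S : sieve C a) :
  is_sieve S -> is_sieve (pull h S).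
Proof. intros H x y f g Hf. unfold pull in *. rewrite cmp_assoc. apply H, Hf. Qed.

Section Ext4.
Context {C : Cat} (P : Doctrine C) (J : topology (groth P))
  {D : Cat} (L : Doctrine D) (JA : topology (groth L)) (u : Mor1 P L)
  (hm : a_mono u) (hn : a_nat u)
  (Hmos : is_mos J JA (rt_o u) (rt_m u hm hn))
  (Hsub : forall a S, JA a S -> Kgeom L a S)
  (Hflat : flat (mF u)) (HG : IsGeom L).

Local Notation F := (mF u).
Local Notation v := (vfun P J L u HG).
Local Notation I := (Idoc P J).

Definition vmor : Mor1 I L := @Build_Mor1 C D I L F v.
Lemma vm_mono : a_mono vmor.
Proof. intros c x y H; exact (v_mono P J L u HG c x y H). Qed.
Lemma vm_nat : a_nat vmor.
Proof. intros c d f y. exact (v_nat P J L u hn Hflat HG c d f y). Qed.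

Lemma veta c x : v c (eta P J c x) = ma u c x.
Proof. exact (v_eta P J L JA u hm hn Hmos Hsub HG c x). Qed.

Lemma vm_mos : is_mos (Kgeom I) (Kgeom L) (rt_o vmor) (rt_m vmor vm_mono vm_nat).
Proof.
  split; [|split; [|split]].
  -
    intros [c S0] R [HRs HRc]. split.
    + intros b b' g g' [b0 [f [k [Hf E]]]]. exists b0, f, (cmp k g'); split; [exact Hf|].
      subst g. symmetry; apply cmp_assoc.
    + intros Z; split.
      * intros Hle b f _. apply arr_le; exact Hle.
      * intros H. simpl. apply (adjQ P J L JA u hm hn Hmos Hsub HG).
        apply (proj2 (HRc (Qset P J L JA u hm hn Hmos Hsub c Z))).
        intros [d T] h Hh d' k y Hy. simpl in *.
        pose (kk := exist (fun f0 : hom D (fobj F d') (fobj F d) =>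
                         ple L (ma u d' y) (pmap L f0 (v d T)))
                      (fmap F k) (v_upper P J L u HG d T d' k y Hy)
                   : hom (groth L) (existT _ (fobj F d') (ma u d' y)) (existT _ (fobj F d) (v d T))).
        pose proof (H _ (cmp (rt_m vmor vm_mono vm_nat _ _ h) kk)) as H1.
        simpl in H1. rewrite fmap_cmp. apply H1.
        exists (existT _ d T), h, kk. split; [exact Hh| reflexivity].
  -
    intros d. pose proof (Hsub _ _ (proj1 (proj2 Hmos) d)) as [_ Hc].
    apply (covers_mono L d _ _ Hc).
    + intros b b' h g [c [k]]. exists c. constructor. exact (cmp k g).
    + intros b h [[c x] [k]]. exists (existT _ c (eta P J c x)). constructor.
      refine (exist _ (proj1_sig k) _). simpl. rewrite veta. exact (proj2_sig k).
  -
    intros d [c1 S1] [c2 S2] g1 g2.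
    apply (covers_trans L d (Rg P J L u HG d c1 S1 g1)); [apply (lemA P J L u HG)| |].
    + intros b b' h h' [c [f1 [f2 [k [E1 E2]]]]]. exists c, f1, f2, (cmp k h'). split.
      * rewrite cmp_assoc, E1, <- cmp_assoc. reflexivity.
      * rewrite cmp_assoc, E2, <- cmp_assoc. reflexivity.
    + intros b h [d1 [f [x [k [Hx E]]]]].
      refine (proj2 (covers_trans L b (Rg P J L u HG b c2 S2 (cmp g2 h)) _ _ _ _)).
      * apply (lemA P J L u HG).
      * apply pull_sieve. intros b0 b' h0 h' [c [f1 [f2 [k0 [E1 E2]]]]]. exists c, f1, f2, (cmp k0 h'). split.
        -- rewrite cmp_assoc, E1, <- cmp_assoc. reflexivity.
        -- rewrite cmp_assoc, E2, <- cmp_assoc. reflexivity.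
      * intros b' h' [d2 [f' [x' [k' [Hx' E']]]]].
        pose proof (Hsub _ _ (proj1 (proj2 (proj2 Hmos)) b' (existT _ d1 x) (existT _ d2 x')
                      (cmp k h') k')) as [_ Hc].
        refine (proj2 (covers_mono L b' _ _ Hc _ _)).
        -- apply pull_sieve, pull_sieve.
           intros b0 b1 h0 h1 [c [f1 [f2 [k0 [E1 E2]]]]]. exists c, f1, f2, (cmp k0 h1). split.
           ++ rewrite cmp_assoc, E1, <- cmp_assoc. reflexivity.
           ++ rewrite cmp_assoc, E2, <- cmp_assoc. reflexivity.
        -- intros b'' h'' [[c y] [f1 [f2 [k'' [E1 E2]]]]].
           unfold pull.
           assert (Hin1 : proj1_sig S1 c (cmp f (proj1_sig f1)) y)
             by exact (proj1 (proj2_sig S1) _ _ f x (proj1_sig f1) y Hx (proj2_sig f1)).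
           assert (Hin2 : proj1_sig S2 c (cmp f' (proj1_sig f2)) y)
             by exact (proj1 (proj2_sig S2) _ _ f' x' (proj1_sig f2) y Hx' (proj2_sig f2)).
           exists (existT _ c (eta P J c y)).
           exists (exist _ (cmp f (proj1_sig f1)) (eta_le P J c1 S1 c _ y Hin1)).
           exists (exist _ (cmp f' (proj1_sig f2)) (eta_le P J c2 S2 c _ y Hin2)).
           assert (Hk : ple L (projT2 b'') (pmap L (proj1_sig k'') (v c (eta P J c y)))).
           { rewrite veta. exact (proj2_sig k''). }
           exists (exist _ (proj1_sig k'') Hk).
           pose proof (f_equal (@proj1_sig _ _) E1) as B1. pose proof (f_equal (@proj1_sig _ _) E2) as B2.
           simpl in B1, B2, E, E' |- *.
           split; apply sig_ext; simpl; rewrite fmap_cmp, <- cmp_assoc.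
           ++ rewrite B1, !cmp_assoc, E. reflexivity.
           ++ rewrite B2, !cmp_assoc, E'. reflexivity.
  -
    intros [e W] [c1 S1] [c2 S2] f1 f2 g Hg.
    refine (covers_mono L _ (Rg P J L u HG _ c1 S1 g) _
              (proj2 (lemA P J L u HG _ c1 S1 g)) _ _).
    + intros b b' h h' [c [e' [k [E1 E2]]]]. exists c, e', (cmp k h'). split; [exact E1|].
      rewrite cmp_assoc, E2, <- cmp_assoc. reflexivity.
    + intros [e0 W0] h [d0 [f [x [k [Hx E]]]]].
      apply (f_equal (@proj1_sig _ _)) in Hg.
      destruct h as [h0 ph], k as [k0 pk], g as [g0 pg], f1 as [f10 pf1], f2 as [f20 pf2].
      cbn in *.
      assert (Heq : cmp (fmap F (cmp f10 f)) k0 = cmp (fmap F (cmp f20 f)) k0).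
      { rewrite !fmap_cmp, <- !cmp_assoc, <- E, !cmp_assoc, Hg. reflexivity. }
      destruct (flat_eq P L u Hflat _ _ _ _ _ _ Heq) as [c0 [e1 [k1 [E3 E4]]]].
      assert (Hin : proj1_sig S1 c0 (cmp f e1) (pmap P e1 x))
        by exact (proj1 (proj2_sig S1) _ _ f x e1 _ Hx (ple_refl _ _ _ _)).
      exists (existT _ c0 (eta P J c0 (pmap P e1 x))).
      exists (exist _ (cmp f e1) (eta_le P J c1 S1 c0 _ _ Hin)).
      assert (Hk : ple L W0 (pmap L k1 (v c0 (eta P J c0 (pmap P e1 x))))).
      { rewrite veta, hn, <- pmap_cmp, E4. exact pk. }
      exists (exist _ k1 Hk). split; apply sig_ext; cbn.
      * rewrite !cmp_assoc, E3. reflexivity.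
      * rewrite fmap_cmp, <- cmp_assoc, E4, E. reflexivity.
Qed.
End Ext4.


Section Char.
Context {C : Cat} (P : Doctrine C) (J : topology (groth P))
  {D : Cat} (L : Doctrine D).
Local Notation I := (Idoc P J).

Definition covpres (w : Mor1 I L) (hw : a_mono w) (hnw : a_nat w) : Prop :=
  forall a S, Kgeom I a S ->
    Kgeom L (rt_o w a) (fun d g => exists b f k, S b f /\ g = cmp (rt_m w hw hnw b a f) k).

Lemma char (w : Mor1 I L) hw hnw (Hc : covpres w hw hnw) c (S : Ipt C P J c) Z :
  ple L (ma w c S) Z <->
  (forall d f x, proj1_sig S d f x ->
     ple L (ma w d (eta P J d x)) (pmap L (fmap (mF w) f) Z)).
Proof.
  split.
  - intros H d f x Hx. eapply ple_trans.
    + apply hw. exact (eta_le P J c S d f x Hx).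
    + assert (E0 : ma w d (Imap C P J d c f S) = pmap L (fmap (mF w) f) (ma w c S))
        by exact (hnw d c f S).
      rewrite E0. apply pmap_mono, H.
  - intros H.
    set (R := fun (b : groth I) (h : hom (groth I) b (existT _ c S)) =>
           exists d x (h0 : hom (groth I) (existT _ d (eta P J d x)) (existT _ c S))
             (k0 : hom (groth I) b (existT _ d (eta P J d x))), h = cmp h0 k0).
    assert (HR : Kgeom I (existT _ c S) R).
    { split.
      - intros b b' h g [d [x [h0 [k0 ->]]]]. exists d, x, h0, (cmp k0 g).
        symmetry; apply cmp_assoc.
      - intros W; split.
        + intros Hle b f _. apply (arr_le I). exact Hle.
        + intros HW d f x Hx.
          pose (h0 := exist (fun f0 : hom C d c => Iple C P J d (eta P J d x) (Imap C P J d c f0 S))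
                      f (eta_le P J c S d f x Hx)
                      : hom (groth I) (existT _ d (eta P J d x)) (existT _ c S)).
          pose proof (HW _ (cmp h0 (gid _ _ _))) as H1.
          assert (H2 : Iple C P J d (eta P J d x) (Imap C P J d c (cmp f (idm d)) W)).
          { apply H1. exists d, x, h0, (gid _ _ _). reflexivity. }
          rewrite cmp_id_r in H2.
          exact (in_of_eta_le P J c W d f x H2). }
    destruct (Hc _ _ HR) as [_ Hcov].
    apply (proj2 (Hcov Z)).
    intros b g [b0 [h [k [Hh ->]]]]. destruct Hh as [d [x [h0 [k0 ->]]]].
    destruct b as [e W0]. destruct b0 as [d' T].
    destruct h0 as [h00 ph0], k0 as [k00 pk0], k as [k1 pk1]. cbn in *.
    pose proof (in_of_eta_le P J c S d h00 x ph0) as Hx.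
    eapply ple_trans; [exact pk1|].
    rewrite fmap_cmp, !pmap_cmp. apply pmap_mono.
    eapply ple_trans; [apply hw, pk0|].
    assert (E0 : ma w d' (Imap C P J d' d k00 (eta P J d x)) = pmap L (fmap (mF w) k00) (ma w d (eta P J d x)))
        by exact (hnw d' d k00 _).
    rewrite E0. apply pmap_mono.
    apply H, Hx.
Qed.
End Char.

Lemma mor_eq {C D} {P : Doctrine C} {Q : Doctrine D} (F : Functor C D)
  (a1 : forall c, pt P c -> pt Q (fobj (Fcomp F (FId C)) c))
  (a2 : forall c, pt P c -> pt Q (fobj F c)) :
  (forall c x, a1 c x = a2 c x) -> Build_Mor1 C D P Q (Fcomp F (FId C)) a1 = Build_Mor1 C D P Q F a2.
Proof.
  destruct F as [o m i cc]. intros H.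
  assert (E : a1 = a2).
  { apply functional_extensionality_dep; intro c. apply functional_extensionality; intro x. apply H. }
  subst. unfold Fcomp; cbn.
  match goal with |- Build_Mor1 _ _ _ _ (Build_Functor _ _ _ _ ?p ?q) _ = _ =>
    rewrite (proof_irrelevance _ p i), (proof_irrelevance _ q cc) end.
  reflexivity.
Qed.


Lemma uniq {C D} (P : Doctrine C) (J : topology (groth P)) (L : Doctrine D) (HG : IsGeom L)
  (w1 w2 : Mor1 (Idoc P J) L) hw1 hn1 (Hc1 : covpres P J L w1 hw1 hn1)
  hw2 hn2 (Hc2 : covpres P J L w2 hw2 hn2) :
  comp1 w1 (Build_Mor1 C C P (Idoc P J) (FId C) (eta P J))
  = comp1 w2 (Build_Mor1 C C P (Idoc P J) (FId C) (eta P J)) -> w1 = w2.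
Proof.
  intros E.
  pose proof (fun c S Z => char P J L w1 hw1 hn1 Hc1 c S Z) as Ch1.
  pose proof (fun c S Z => char P J L w2 hw2 hn2 Hc2 c S Z) as Ch2.
  clear Hc1 Hc2 hw1 hw2 hn1 hn2.
  destruct w1 as [F1 a1], w2 as [F2 a2].
  assert (Eo : fobj F1 = fobj F2) by exact (f_equal (fun m => fobj (mF m)) E).
  destruct F1 as [o1 m1 i1 c1], F2 as [o2 m2 i2 c2]. cbn in Eo. subst o2.
  pose proof (f_equal (fun m : Mor1 P L =>
     existT (fun o : C -> D => forall a b, hom C a b -> hom D (o a) (o b))
            (fobj (mF m)) (@fmap _ _ (mF m))) E) as Em.
  cbn in Em. apply inj_pair2 in Em.
  assert (Em' : m1 = m2) by exact Em. subst m2.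
  destruct (proof_irrelevance _ i1 i2), (proof_irrelevance _ c1 c2).
  pose proof (f_equal (fun m : Mor1 P L =>
     existT (fun o : C -> D => forall c, pt P c -> pt L (o c))
            (fobj (mF m)) (ma m)) E) as Ea.
  cbn in Ea. apply inj_pair2 in Ea.
  assert (Ea' : forall c x, a1 c (eta P J c x) = a2 c (eta P J c x)).
  { intros c x. exact (f_equal (fun g => g c x) Ea). }
  cbn in Ch1, Ch2.
  assert (a1 = a2).
  { apply functional_extensionality_dep; intro c. apply functional_extensionality; intro S.
    apply (g_antisym L HG).
    - apply Ch1. intros d f x Hx. rewrite Ea'.
      exact (proj1 (Ch2 c S _) (ple_refl _ _ _ _) d f x Hx).
    - apply Ch2. intros d f x Hx. rewrite <- Ea'.
      exact (proj1 (Ch1 c S _) (ple_refl _ _ _ _) d f x Hx). }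
  subst. reflexivity.
Qed.

Lemma comp_vmor {C D} (P : Doctrine C) (J : topology (groth P)) (L : Doctrine D)
  (JA : topology (groth L)) (u : Mor1 P L) (hm : a_mono u) (hn : a_nat u)
  (Hmos : is_mos J JA (rt_o u) (rt_m u hm hn))
  (Hsub : forall a S, JA a S -> Kgeom L a S) (HG : IsGeom L) :
  comp1 (vmor P J L u HG) (Build_Mor1 C C P (Idoc P J) (FId C) (eta P J)) = u.
Proof.
  pose proof (veta P J L JA u hm hn Hmos Hsub HG) as Hv.
  clear Hmos. destruct u as [Fu au]. unfold comp1, vmor. cbn [mF ma].
  apply mor_eq. intros c x. apply Hv.
Qed.

Theorem theorem6p2
  (AObj : DocSite -> Prop)
  (AMor : forall X Y : DocSite, Mor1 (sP X) (sP Y) -> Prop)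
  (GA : GDoc -> Prop)
  (JA : forall G : GDoc, topology (groth (gL G)))
  (H : CoarseCompletion AObj AMor GA JA)
  (X : DocSite) (G : GDoc) (HX : AObj X) (HG : GA G) :
  GA (Isite X) /\
  (forall v : Mor1 (gL (Isite X)) (gL G),
      IsDocMor (KSite (Isite X)) (KSite G) v ->
      AMor X (toSite G (JA G)) (comp1 v (etaMor X))) /\
  (forall u : Mor1 (sP X) (gL G),
      AMor X (toSite G (JA G)) u ->
      exists! v : Mor1 (gL (Isite X)) (gL G),
        IsDocMor (KSite (Isite X)) (KSite G) v /\ comp1 v (etaMor X) = u) /\
  (forall v v' : Mor1 (gL (Isite X)) (gL G),
      IsDocMor (KSite (Isite X)) (KSite G) v ->
      IsDocMor (KSite (Isite X)) (KSite G) v' ->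
      forall al : forall c, hom (gC G) (fobj (mF v) c) (fobj (mF v') c),
        Is2Cell v v' al <-> Is2Cell (comp1 v (etaMor X)) (comp1 v' (etaMor X)) al).
Proof.
  destruct H as [Hobj Hmor Hid Hcomp Hgeom Hsubs HJobj HJmor HI Heta].
  split; [exact (HI X HX)|].
  split.
  { intros v Hv.
    exact (Hcomp X (toSite (Isite X) (JA (Isite X))) (toSite G (JA G)) (etaMor X) v HX (HJobj _ (HI X HX)) (HJobj G HG) (Heta X HX)
             (HJmor (Isite X) G v (HI X HX) HG Hv)). }
  split.
  { intros u Hu.
    destruct (Hmor X (toSite G (JA G)) u HX (HJobj G HG) Hu) as [Hflat [hm [hn Hmos]]].
    assert (Huniq : forall w1 w2 : Mor1 (gL (Isite X)) (gL G),
               IsDocMor (KSite (Isite X)) (KSite G) w1 ->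
               IsDocMor (KSite (Isite X)) (KSite G) w2 ->
               comp1 w1 (etaMor X) = comp1 w2 (etaMor X) -> w1 = w2).
    { intros w1 w2 [_ [h1 [n1 M1]]] [_ [h2 [n2 M2]]] E.
      exact (uniq (sP X) (sJ X) (gL G) (Hgeom G HG) w1 w2 h1 n1 (proj1 M1) h2 n2 (proj1 M2) E). }
    assert (Hvm : IsDocMor (KSite (Isite X)) (KSite G) (vmor (sP X) (sJ X) (gL G) u (Hgeom G HG))).
    { split; [exact Hflat|].
      exists (vm_mono (sP X) (sJ X) (gL G) u (Hgeom G HG)),
             (vm_nat (sP X) (sJ X) (gL G) u hn Hflat (Hgeom G HG)).
      exact (vm_mos (sP X) (sJ X) (gL G) (JA G) u hm hn Hmos (Hsubs G HG) Hflat (Hgeom G HG)). }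
    assert (Evm : comp1 (vmor (sP X) (sJ X) (gL G) u (Hgeom G HG)) (etaMor X) = u)
      by exact (comp_vmor (sP X) (sJ X) (gL G) (JA G) u hm hn Hmos (Hsubs G HG) (Hgeom G HG)).
    exists (vmor (sP X) (sJ X) (gL G) u (Hgeom G HG)). split; [split; [exact Hvm|exact Evm]|].
    intros w [Hw Ew]. apply Huniq; [exact Hvm|exact Hw|]. transitivity u; [exact Evm| symmetry; exact Ew]. }
  { intros v v' Hv Hv' al. split.
    - intros [Hn Hl]. split; [exact Hn|]. intros c x. exact (Hl c (eta _ _ c x)).
    - intros [Hn Hl]. split; [exact Hn|]. intros c S.
      destruct Hv as [_ [h1 [n1 M1]]], Hv' as [_ [h2 [n2 M2]]].
      apply (proj2 (char (sP X) (sJ X) (gL G) v h1 n1 (proj1 M1) c S _)).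
      intros d f x Hx.
      assert (EE : pmap (gL G) (al d) (pmap (gL G) (fmap (mF v') f) (ma v' c S))
                   = pmap (gL G) (fmap (mF v) f) (pmap (gL G) (al c) (ma v' c S))).
      { rewrite <- !pmap_cmp. f_equal. symmetry. exact (Hn d c f). }
      eapply ple_trans; [|exact (eq_ind _ (fun t => ple (gL G) _ t) (ple_refl _ _ _ _) _ EE)].
      eapply ple_trans; [exact (Hl d x)|]. apply pmap_mono.
      exact (proj1 (char (sP X) (sJ X) (gL G) v' h2 n2 (proj1 M2) c S _) (ple_refl _ _ _ _) d f x Hx). }
Qed.
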